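(* Assume the multi-layer setting below with $\nabla f$ being $\hat L$-Lipschitz, and consider the multi-layer SAM flow at a point where not all $g_{k,l}$ vanish. Then for every layer $l\in[D]$ and all $i,j\in[K_l]$ with $i\neq j$, $$\frac{d}{dt}\big(\|\mathcal G_{i,l}\|_F^2-\|\mathcal G_{j,l}\|_F^2\big)=2\rho u_D\big(\|g_{i,l}\|_F^2-\|g_{j,l}\|_F^2\big)+R_{ij,l},$$ where there is a constant $C$ depending only on the maps $\Phi_1,\ldots,\Phi_D$, the $K_l$, $\hat L$, the Frobenius norms of all current cores and the norm of $\nabla f$ at the current point, such that $|R_{ij,l}|\le C\rho^2$ for all $\rho\in(0,1]$.
   Context: Multi-layer setting: there are $D$ layers. Layer $l\in[D]$ has $K_l\ge2$ cores $\mathcal G_{1,l},\ldots,\mathcal G_{K_l,l}$ lying in finite-dimensional real tensor spaces (Frobenius inner product $\langle\cdot,\cdot\rangle_F$, norm $\|\cdot\|_F$), and a multilinear map $\Phi_l$ producing the layer tensor $\mathcal T_l=\Phi_l(\mathcal G_{1,l},\ldots,\mathcal G_{K_l,l})$. The loss is $F=f(\mathcal T_1,\ldots,\mathcal T_D)$ with $f$ continuously differentiable and its full gradient $\hat L$-Lipschitz: $\|\nabla f(\mathcal X)-\nabla f(\mathcal Y)\|\le \hat L\|\mathcal X-\mathcal Y\|$ where $\|\mathcal X\|^2=\sum_l\|\mathcal X_l\|_F^2$ for $\mathcal X=(\mathcal X_1,\ldots,\mathcal X_D)$. Multi-layer SAM flow with radius $\rho>0$: $g_{k,l}=\nabla_{\mathcal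 G_{k,l}}F$ at the current cores, $u_D=(\sum_{l=1}^D\sum_{k=1}^{K_l}\|g_{k,l}\|_F^2)^{-1/2}$, $\tilde{\mathcal G}_{k,l}=\mathcal G_{k,l}+\rho u_D g_{k,l}$, $\tilde g_{k,l}=\nabla_{\mathcal G_{k,l}}F$ evaluated at all perturbed cores $\tilde{\mathcal G}$, and $\frac{d}{dt}\mathcal G_{k,l}=-\tilde g_{k,l}$ for all $k,l$. *)

(* Defs.v *)
From HB Require Import structures.
From mathcomp Require Import all_boot all_order all_algebra.
From mathcomp Require Import all_classical all_reals.
From mathcomp Require Import topology normedtype derive.
Unset Printing Implicit Defensive.
Import Order.TTheory GRing.Theory Num.Theory.
Import numFieldNormedType.Exports.
Local Open Scope ring_scope.

Section MultiLayer.
Variable R : realType.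

(* A finite-dimensional real tensor space is represented by its flattening
   'rV[R]_n; the Frobenius inner product is the Euclidean one. *)
Definition dotF {n} (x y : 'rV[R]_n) : R := \sum_(i < n) x ord0 i * y ord0 i.
Definition normF {n} (x : 'rV[R]_n) : R := Num.sqrt (dotF x x).

Definition multilinear {K : nat} {n : 'I_K -> nat} {m : nat}
  (Phi : (forall k : 'I_K, 'rV[R]_(n k)) -> 'rV[R]_m) : Prop :=
  forall (x : forall k : 'I_K, 'rV[R]_(n k)) (k : 'I_K) (a : R) (y z : 'rV[R]_(n k)),
    Phi (dfwith x k (a *: y + z)) = a *: Phi (dfwith x k y) + Phi (dfwith x k z).

Variables (D : nat) (K : 'I_D -> nat) (n : forall l : 'I_D, 'I_(K l) -> nat)
          (m : 'I_D -> nat).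

Definition tens := forall l : 'I_D, 'rV[R]_(m l).
Definition addT (X Y : tens) : tens := fun l => X l + Y l.
Definition scaleT (a : R) (X : tens) : tens := fun l => a *: X l.
Definition oppT (X : tens) : tens := fun l => - X l.
Definition dotT (X Y : tens) : R := \sum_(l < D) dotF (X l) (Y l).
Definition normT (X : tens) : R := Num.sqrt (\sum_(l < D) normF (X l) ^+ 2).

Definition cores := forall l : 'I_D, forall k : 'I_(K l), 'rV[R]_(n l k).
Definition addC (G H : cores) : cores := fun l k => G l k + H l k.
Definition scaleC (a : R) (G : cores) : cores := fun l k => a *: G l k.
Definition zeroC : cores := fun l k => 0.
Definition singleC {l : 'I_D} {k : 'I_(K l)} (v : 'rV[R]_(n l k)) : cores :=
  dfwith zeroC l (dfwith (zeroC l) k v).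

Variable Phi : forall l : 'I_D, (forall k : 'I_(K l), 'rV[R]_(n l k)) -> 'rV[R]_(m l).

Definition layers (G : cores) : tens := fun l => Phi l (G l).

Definition lossF (f : tens -> R) (G : cores) : R := f (layers G).

Definition gradC (f : tens -> R) (G : cores) (l : 'I_D) (k : 'I_(K l))
  : 'rV[R]_(n l k) :=
  \row_(i < n l k)
     derive (fun s : R => lossF f (addC G (scaleC s (singleC (delta_mx ord0 i)))))
            0 1.

Definition uD (f : tens -> R) (G : cores) : R :=
  (Num.sqrt (\sum_(l < D) \sum_(k < K l) normF (gradC f G l k) ^+ 2))^-1.

Definition perturbed (f : tens -> R) (rho : R) (G : cores) : cores :=
  fun l k => G l k + (rho * uD f G) *: gradC f G l k.

Definition samGrad (f : tens -> R) (rho : R) (G : cores) (l : 'I_D) (k : 'I_(K l))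
  : 'rV[R]_(n l k) := gradC f (perturbed f rho G) l k.

(* "f is continuously differentiable with gradient gf": directional derivatives
   are given by <gf X, H>; continuity of gf follows from the Lipschitz hypothesis *)
Definition has_gradient (f : tens -> R) (gf : tens -> tens) : Prop :=
  forall X H : tens,
    is_derive (0 : R) (1 : R) (fun s : R => f (addT X (scaleT s H))) (dotT (gf X) H).

Definition lipschitz_grad (gf : tens -> tens) (Lhat : R) : Prop :=
  forall X Y : tens, normT (addT (gf X) (oppT (gf Y))) <= Lhat * normT (addT X (oppT Y)).

Definition sam_flow_at (f : tens -> R) (rho : R) (gamma : R -> cores) (t : R) : Prop :=
  forall (l : 'I_D) (k : 'I_(K l)),
    is_derive t (1 : R) (fun s : R => gamma s l k) (- samGrad f rho (gamma t) l k).

End MultiLayer.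

Arguments multilinear {R K n m} Phi.
Arguments normT {R D m} X.
Arguments dotT {R D m} X Y.
Arguments layers {R D K n m} Phi G l.
Arguments lossF {R D K n m} Phi f G.
Arguments gradC {R D K n m} Phi f G l k.
Arguments uD {R D K n m} Phi f G.
Arguments perturbed {R D K n m} Phi f rho G l k.
Arguments samGrad {R D K n m} Phi f rho G l k.
Arguments has_gradient {R D m} f gf.
Arguments lipschitz_grad {R D m} gf Lhat.
Arguments sam_flow_at {R D K n m} Phi f rho gamma t.
Arguments dotF {R n} x y.
Arguments normF {R n} x.

(* Main.v *)
Set Warnings "-all".
Require Import Defs.
From HB Require Import structures.
From mathcomp Require Import all_boot all_order all_algebra.
From mathcomp Require Import all_classical all_reals.
From mathcomp Require Import topology normedtype derive.
From mathcomp Require Import ring lra.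
Import Order.TTheory GRing.Theory Num.Theory.
Import numFieldNormedType.Exports.
Local Open Scope ring_scope.

Section Aux.
Variable R : realType.

Lemma sqr_norm (x : R) : `|x| ^+ 2 = x ^+ 2.
Proof. exact: real_normK (num_real _). Qed.

Lemma dfw_in K (nn : 'I_K -> nat) (x : forall k : 'I_K, 'rV[R]_(nn k)) i v :
  dfwith x i v i = v.
Proof. exact: dfwith_in. Qed.
Lemma dfw_out K (nn : 'I_K -> nat) (x : forall k : 'I_K, 'rV[R]_(nn k)) i v j :
  i != j -> dfwith x i v j = x j.
Proof. exact: dfwith_out. Qed.

Definition n1 {n} (x : 'rV[R]_n) : R := \sum_(p < n) `|x ord0 p|.

Lemma n1_ge0 n (x : 'rV[R]_n) : 0 <= n1 x.
Proof. by apply: sumr_ge0 => p _. Qed.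

Lemma n1D n (x y : 'rV[R]_n) : n1 (x + y) <= n1 x + n1 y.
Proof.
rewrite /n1 -big_split /=; apply: ler_sum => p _; rewrite mxE; exact: ler_normD.
Qed.

Lemma n1N n (x : 'rV[R]_n) : n1 (- x) = n1 x.
Proof. by apply: eq_bigr => p _; rewrite mxE normrN. Qed.

Lemma n1B n (x y : 'rV[R]_n) : n1 (x - y) <= n1 x + n1 y.
Proof. by rewrite -(n1N _ y); apply: n1D. Qed.

Lemma n1Z n a (x : 'rV[R]_n) : n1 (a *: x) = `|a| * n1 x.
Proof. by rewrite /n1 mulr_sumr; apply: eq_bigr => p _; rewrite mxE normrM. Qed.

Lemma n1_0 n : n1 (0 : 'rV[R]_n) = 0.
Proof. by rewrite /n1 big1 // => p _; rewrite mxE normr0. Qed.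

Lemma n1_delta n (p : 'I_n) : n1 (delta_mx 0 p : 'rV[R]_n) = 1.
Proof.
rewrite /n1 (bigD1 p) //= big1 ?addr0; first by rewrite mxE !eqxx normr1.
by move=> q /negbTE qp; rewrite mxE eq_sym qp andbF normr0.
Qed.

Lemma coord_le_n1 n (x : 'rV[R]_n) p : `|x ord0 p| <= n1 x.
Proof.
rewrite /n1 (bigD1 p) //= lerDl; by apply: sumr_ge0.
Qed.

Lemma dotF_xx n (x : 'rV[R]_n) : dotF x x = \sum_p (x ord0 p) ^+ 2.
Proof. by apply: eq_bigr => p _; rewrite expr2. Qed.

Lemma dotF_ge0 n (x : 'rV[R]_n) : 0 <= dotF x x.
Proof. by rewrite dotF_xx; apply: sumr_ge0 => p _; apply: sqr_ge0. Qed.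

Lemma normF_ge0 n (x : 'rV[R]_n) : 0 <= normF x.
Proof. exact: sqrtr_ge0. Qed.

Lemma normF_sq n (x : 'rV[R]_n) : normF x ^+ 2 = dotF x x.
Proof. by rewrite /normF sqr_sqrtr // dotF_ge0. Qed.

Lemma sqrt_le_of_sq (a b : R) : 0 <= b -> a <= b ^+ 2 -> Num.sqrt a <= b.
Proof.
move=> b0 ab; rewrite -(ger0_norm b0) -sqrtr_sqr.
have [a0|a0] := lerP 0 a; first by rewrite ler_sqrt // (le_trans a0 ab).
by rewrite ler_sqrt ?sqr_ge0 //; lra.
Qed.

Lemma le_sqrt_of_sq (a b : R) : 0 <= b -> b ^+ 2 <= a -> b <= Num.sqrt a.
Proof.
move=> b0 ab; rewrite -(ger0_norm b0) -sqrtr_sqr ler_sqrt //.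
exact: le_trans (sqr_ge0 b) ab.
Qed.

Lemma coord_le_normF n (x : 'rV[R]_n) p : `|x ord0 p| <= normF x.
Proof.
apply: le_sqrt_of_sq => //; rewrite sqr_norm dotF_xx (bigD1 p) //= lerDl.
by apply: sumr_ge0 => q _; apply: sqr_ge0.
Qed.

Lemma sum_sq_le (I : finType) (a : I -> R) : (forall i, 0 <= a i) ->
  \sum_i a i ^+ 2 <= (\sum_i a i) ^+ 2.
Proof.
move=> a0; rewrite expr2 mulr_suml; apply: ler_sum => i _.
rewrite expr2 ler_wpM2l // (bigD1 i) //= lerDl; by apply: sumr_ge0.
Qed.

Lemma normF_le_n1 n (x : 'rV[R]_n) : normF x <= n1 x.
Proof.
apply: sqrt_le_of_sq; first exact: n1_ge0.
rewrite dotF_xx; have := @sum_sq_le _ (fun p => `|x ord0 p|) (fun p => normr_ge0 _).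
by under eq_bigr do rewrite sqr_norm.
Qed.

Lemma n1_le_normF n (x : 'rV[R]_n) : n1 x <= n%:R * normF x.
Proof.
rewrite /n1 mulr_natl -[X in _ *+ X](card_ord n) -sumr_const; apply: ler_sum => p _.
exact: coord_le_normF.
Qed.

Lemma dotF_le n (a b : 'rV[R]_n) : `|dotF a b| <= normF a * n1 b.
Proof.
rewrite /dotF /n1 mulr_sumr; apply: le_trans (ler_norm_sum _ _ _) _.
apply: ler_sum => p _; rewrite normrM ler_wpM2r //; exact: coord_le_normF.
Qed.

Lemma dotFDr n (a b c : 'rV[R]_n) : dotF a (b + c) = dotF a b + dotF a c.
Proof. by rewrite /dotF -big_split; apply: eq_bigr => p _; rewrite mxE mulrDr. Qed.
Lemma dotFDl n (a b c : 'rV[R]_n) : dotF (b + c) a = dotF b a + dotF c a.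
Proof. by rewrite /dotF -big_split; apply: eq_bigr => p _; rewrite mxE mulrDl. Qed.
Lemma dotFNl n (a b : 'rV[R]_n) : dotF (- b) a = - dotF b a.
Proof. by rewrite /dotF -sumrN; apply: eq_bigr => p _; rewrite mxE mulNr. Qed.
Lemma dotFNr n (a b : 'rV[R]_n) : dotF a (- b) = - dotF a b.
Proof. by rewrite /dotF -sumrN; apply: eq_bigr => p _; rewrite mxE mulrN. Qed.
Lemma dotFZr n k (a b : 'rV[R]_n) : dotF a (k *: b) = k * dotF a b.
Proof. by rewrite /dotF mulr_sumr; apply: eq_bigr => p _; rewrite mxE mulrCA. Qed.
Lemma dotFZl n k (a b : 'rV[R]_n) : dotF (k *: b) a = k * dotF b a.
Proof. by rewrite /dotF mulr_sumr; apply: eq_bigr => p _; rewrite mxE mulrA. Qed.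
Lemma dotFC n (a b : 'rV[R]_n) : dotF a b = dotF b a.
Proof. by apply: eq_bigr => p _; rewrite mulrC. Qed.
Lemma dotF0r n (a : 'rV[R]_n) : dotF a 0 = 0.
Proof. by rewrite /dotF big1 // => p _; rewrite mxE mulr0. Qed.

Section ML.
Variables (K : nat) (nn : 'I_K -> nat) (m : nat)
  (Phi : (forall k : 'I_K, 'rV[R]_(nn k)) -> 'rV[R]_m).
Hypothesis HPhi : multilinear Phi.
Implicit Types (x : forall k : 'I_K, 'rV[R]_(nn k)) (k : 'I_K).

Lemma ml0 x k : Phi (dfwith x k 0) = 0.
Proof.
have := HPhi x k 1 0 0; rewrite !scale1r addr0 => H.
by apply: (@addrI _ (Phi (dfwith x k 0))); rewrite addr0 -H.
Qed.

Lemma mlD x k y z : Phi (dfwith x k (y + z)) = Phi (dfwith x k y) + Phi (dfwith x k z).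
Proof. by have := HPhi x k 1 y z; rewrite !scale1r. Qed.

Lemma mlZ x k a y : Phi (dfwith x k (a *: y)) = a *: Phi (dfwith x k y).
Proof. by have := HPhi x k a y 0; rewrite !addr0 ml0 addr0. Qed.

Lemma ml_sum x k (I : finType) (a : I -> R) (v : I -> 'rV[R]_(nn k)) :
  Phi (dfwith x k (\sum_i a i *: v i)) = \sum_i a i *: Phi (dfwith x k (v i)).
Proof.
apply: (big_ind2 (fun y s => Phi (dfwith x k y) = s)).
- exact: ml0.
- by move=> y1 s1 y2 s2 <- <-; rewrite mlD.
- by move=> i _; rewrite mlZ.
Qed.

Lemma dfwith_id x k : dfwith x k (x k) = x.
Proof.
apply: functional_extensionality_dep => j.
by case: dfwithP.
Qed.

Lemma ml_expand x k :
  Phi x = \sum_p x k ord0 p *: Phi (dfwith x k (delta_mx 0 p)).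
Proof.
rewrite -ml_sum -[in LHS](dfwith_id x k); congr (Phi (dfwith x k _)).
exact: row_sum_delta.
Qed.


Lemma n1_sum' n (I : Type) (s : seq I) (P : pred I) (v : I -> 'rV[R]_n) :
  n1 (\sum_(i <- s | P i) v i) <= \sum_(i <- s | P i) n1 (v i).
Proof.
apply: (big_ind2 (fun a b => n1 a <= b)).
- by rewrite n1_0.
- by move=> a1 b1 a2 b2 h1 h2; apply: le_trans (n1D _ _ _) (lerD h1 h2).
- by [].
Qed.

Lemma ml_boundP r : (r <= K)%N -> forall w0 : forall k : 'I_K, 'rV[R]_(nn k),
  exists M, 0 <= M /\ forall w : forall k : 'I_K, 'rV[R]_(nn k),
    (forall k : 'I_K, (r <= k)%N -> w k = w0 k) ->
    n1 (Phi w) <= M * \prod_(k < K | (k < r)%N) n1 (w k).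
Proof.
elim: r => [_ w0|r IH rK w0].
  exists (n1 (Phi w0)); split; first exact: n1_ge0.
  move=> w Hw; have -> : w = w0 by apply: functional_extensionality_dep => k; apply: Hw.
  by rewrite big_pred0 ?mulr1 // => k; rewrite ltn0.
pose ro : 'I_K := Ordinal rK.
have /choice [Mf HM] := fun p : 'I_(nn ro) => IH (ltnW rK) (dfwith w0 ro (delta_mx 0 p)).
exists (\sum_p Mf p); split; first by apply: sumr_ge0 => p _; case: (HM p).
move=> w Hw; rewrite (ml_expand w ro).
apply: le_trans (n1_sum' _ _ _ _ _) _.
set P := \prod_(k < K | (k < r)%N) n1 (w k).
have P0 : 0 <= P by apply: prodr_ge0 => k _; apply: n1_ge0.
have -> : \prod_(k < K | (k < r.+1)%N) n1 (w k) = n1 (w ro) * P.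
  rewrite (bigD1 ro) /=; last by rewrite ltnSn.
  congr (_ * _); apply: eq_bigl => k.
  rewrite ltnS leq_eqVlt -(inj_eq val_inj) /=.
  by case: ltngtP.
rewrite mulr_suml; apply: ler_sum => p _.
rewrite n1Z.
have [Mp0 HMp] := HM p.
have H1 : n1 (Phi (dfwith w ro (delta_mx 0 p))) <= Mf p *
   \prod_(k < K | (k < r)%N) n1 (dfwith w ro (delta_mx 0 p) k).
  apply: HMp => k rk.
  case: (eqVneq ro k) => [e|ne]; first by destruct e; rewrite !dfw_in.
  rewrite !dfw_out //; apply: Hw.
  rewrite ltn_neqAle rk andbT; move: ne; apply: contra => /eqP e.
  by apply/eqP/val_inj.
have E : \prod_(k < K | (k < r)%N) n1 (dfwith w ro (delta_mx 0 p) k) = P.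
  apply: eq_bigr => k kr; rewrite dfw_out //.
  by apply/eqP => e; move: kr; rewrite -e /= ltnn.
rewrite E in H1.
apply: le_trans (ler_wpM2l (normr_ge0 _) H1) _.
rewrite mulrCA ler_wpM2l // ler_wpM2r //.
exact: coord_le_n1.
Qed.

Lemma ml_bound : exists M, 0 <= M /\ forall w : forall k : 'I_K, 'rV[R]_(nn k),
    n1 (Phi w) <= M * \prod_(k < K) n1 (w k).
Proof.
have [M [M0 HM]] := ml_boundP K (leqnn K) (fun k => 0).
exists M; split => // w.
have -> : \prod_(k < K) n1 (w k) = \prod_(k < K | (k < K)%N) n1 (w k).
  by apply: eq_bigl => k; rewrite ltn_ord.
apply: HM => k kK; by move: (ltn_ord k); rewrite ltnNge kK.
Qed.

Lemma ml_lip M : 0 <= M -> (forall w, n1 (Phi w) <= M * \prod_(k < K) n1 (w k)) ->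
  forall x (y : forall k : 'I_K, 'rV[R]_(nn k)) (eta A : R), 0 <= A ->
  (forall k, n1 (y k) <= eta) ->
  (forall k, n1 (x k) + n1 (y k) <= A) ->
  n1 (Phi (fun k => x k + y k) - Phi x) <= K%:R * (M * (eta * \prod_(k < K) (A + 1))).
Proof.
move=> M0 HM x y eta A A0 Hy HA.
pose z (r : nat) : forall k : 'I_K, 'rV[R]_(nn k) :=
  fun k => if (k < r)%N then x k + y k else x k.
have z0 : z 0%N = x by apply: functional_extensionality_dep => k; rewrite /z ltn0.
have zK : z K = (fun k => x k + y k).
  by apply: functional_extensionality_dep => k; rewrite /z ltn_ord.
rewrite -zK -[X in _ - Phi X]z0 -(telescope_sumr (fun r => Phi (z r)) (leq0n K)).
apply: le_trans (n1_sum' _ _ _ _ _) _.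
rewrite mulr_natl -[X in _ *+ X](subn0 K) -sumr_const_nat.
rewrite big_nat_cond [X in _ <= X]big_nat_cond.
apply: ler_sum => r /andP[/andP[_ rK] _].
pose ro : 'I_K := Ordinal rK.
have E1 : z r.+1 = dfwith (z r) ro (x ro + y ro).
  apply: functional_extensionality_dep => k.
  case: (eqVneq ro k) => [e|ne].
    by destruct e; rewrite dfw_in /z /= ltnSn.
  rewrite dfw_out // /z ltnS leq_eqVlt.
  have -> : (nat_of_ord k == r) = false.
    by apply/negbTE; move: ne; rewrite eq_sym; apply: contra => /eqP e; apply/eqP/val_inj.
  by [].
have E2 : dfwith (z r) ro (x ro) = z r.
  apply: functional_extensionality_dep => k.
  case: (eqVneq ro k) => [e|ne].
    by destruct e; rewrite dfw_in /z /= ltnn.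
  by rewrite dfw_out.
rewrite E1 mlD E2 addrAC subrr add0r.
apply: le_trans (HM _) _.
rewrite ler_wpM2l //.
rewrite (bigD1 ro) //= dfw_in.
have P0 : 0 <= \prod_(k < K | k != ro) n1 (dfwith (z r) ro (y ro) k).
  by apply: prodr_ge0 => k _; apply: n1_ge0.
apply: ler_pM => //; first exact: n1_ge0.
have -> : \prod_(k < K | k != ro) n1 (dfwith (z r) ro (y ro) k) =
          \prod_(k < K | k != ro) n1 (z r k).
  by apply: eq_bigr => k kr; rewrite dfw_out // eq_sym.
rewrite [X in _ <= X](bigD1 ro) //=.
have Q0 : 0 <= \prod_(k < K | k != ro) (A + 1) by apply: prodr_ge0 => k _; lra.
have H1 : 1 <= A + 1 by lra.
apply: le_trans _ (ler_peMl Q0 H1).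
apply: ler_prod => k _; rewrite n1_ge0 /=.
have := HA k; have := n1_ge0 _ (y k); rewrite /z; case: ifP => _ h1 h2.
  by apply: le_trans (n1D _ _ _) _; lra.
lra.
Qed.

End ML.
End Aux.
Arguments n1 {R n} x.
Section Main.
Variables (R : realType) (D : nat) (K : 'I_D -> nat)
  (n : forall l : 'I_D, 'I_(K l) -> nat) (m : 'I_D -> nat)
  (Phi : forall l : 'I_D, (forall k : 'I_(K l), 'rV[R]_(n l k)) -> 'rV[R]_(m l)).
Hypothesis HPhi : forall l, multilinear (Phi l).
Variables (f : tens R D m -> R) (gf : tens R D m -> tens R D m).
Hypothesis Hg : has_gradient f gf.

Lemma dfwC_in (x : cores R D K n) l v : dfwith x l v l = v.
Proof. exact: dfwith_in. Qed.
Lemma dfwC_out (x : cores R D K n) l v l' : l != l' -> dfwith x l v l' = x l'.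
Proof. exact: dfwith_out. Qed.
Lemma dfwT_in (x : tens R D m) l v : dfwith x l v l = v.
Proof. exact: dfwith_in. Qed.
Lemma dfwT_out (x : tens R D m) l v l' : l != l' -> dfwith x l v l' = x l'.
Proof. exact: dfwith_out. Qed.

Definition dir (G : cores R D K n) l k (v : 'rV[R]_(n l k)) : tens R D m :=
  dfwith (fun l' => 0 : 'rV[R]_(m l')) l (Phi l (dfwith (G l) k v)).

Lemma layers_line G l k v s :
  layers Phi (Defs.addC R D K n G (Defs.scaleC R D K n s (@singleC R D K n l k v))) =
  addT R D m (layers Phi G) (scaleT R D m s (dir G l k v)).
Proof.
apply: functional_extensionality_dep => l'.
rewrite /layers /addT /scaleT /Defs.addC /Defs.scaleC /singleC /dir.
case: (eqVneq l l') => [e|ne].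
  destruct e; rewrite dfwT_in dfwC_in.
  have -> : (fun k0 => G l k0 + s *: dfwith (zeroC R D K n l) k v k0) =
            dfwith (G l) k (s *: v + G l k).
    apply: functional_extensionality_dep => k'.
    case: (eqVneq k k') => [e|ne].
      by destruct e; rewrite !dfw_in addrC.
    by rewrite !dfw_out // /zeroC scaler0 addr0.
  by rewrite (HPhi l) dfwith_id addrC.
rewrite dfwT_out // dfwC_out // scaler0 addr0.
congr (Phi l' _); apply: functional_extensionality_dep => k'.
by rewrite /zeroC scaler0 addr0.
Qed.

Lemma dotT_dir G l k v X :
  dotT X (dir G l k v) = dotF (X l) (Phi l (dfwith (G l) k v)).
Proof.
rewrite /dotT (bigD1 l) //= /dir dfwT_in big1 ?addr0 // => l' ne.
by rewrite dfwT_out ?dotF0r // eq_sym.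
Qed.

Lemma gradC_eq G l k : gradC Phi f G l k =
  \row_p dotF (gf (layers Phi G) l) (Phi l (dfwith (G l) k (delta_mx ord0 p))).
Proof.
apply/rowP => p; rewrite !mxE.
have -> : (fun s => lossF Phi f (Defs.addC R D K n G (Defs.scaleC R D K n s
    (@singleC R D K n l k (delta_mx ord0 p))))) =
    fun s => f (addT R D m (layers Phi G) (scaleT R D m s (dir G l k (delta_mx ord0 p)))).
  by apply: funext => s; rewrite /lossF layers_line.
case: (Hg (layers Phi G) (dir G l k (delta_mx ord0 p))) => _ ->.
exact: dotT_dir.
Qed.

Lemma dotF_sumr N (I : finType) (a : 'rV[R]_N) (v : I -> 'rV[R]_N) :
  dotF a (\sum_i v i) = \sum_i dotF a (v i).
Proof.
apply: (big_ind2 (fun x y => dotF a x = y)); first exact: dotF0r.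
  by move=> x1 y1 x2 y2 <- <-; rewrite dotFDr.
by [].
Qed.

Lemma conserv G l k : dotF (G l k) (gradC Phi f G l k) =
  dotF (gf (layers Phi G) l) (layers Phi G l).
Proof.
rewrite /layers (@ml_expand _ _ _ _ _ (HPhi l) (G l) k) dotF_sumr gradC_eq.
apply: eq_bigr => p _; rewrite dotFZr mxE; by [].
Qed.

Lemma deriv_sq N (gamma : R -> 'rV[R]_N) t0 v : is_derive t0 (1:R) gamma v ->
  is_derive t0 (1:R) (fun t => normF (gamma t) ^+ 2) (2 * dotF (gamma t0) v).
Proof.
move=> Hd.
have He : forall p, is_derive t0 (1:R) (fun t => gamma t ord0 p) (v ord0 p).
  move=> p; case: Hd => dg Dv; apply: DeriveDef.
    by move/derivable_mxP: dg; apply.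
  by rewrite -Dv (derive_mx dg) mxE.
have -> : (fun t => normF (gamma t) ^+ 2) =
    \sum_(p < N) ((fun t => gamma t ord0 p) * (fun t => gamma t ord0 p)).
  apply: funext => t; rewrite normF_sq dotF_xx fct_sumE /=.
  by apply: eq_bigr => p _; rewrite expr2.
apply: (is_derive_eq (is_derive_sum (fun p => is_deriveM (He p) (He p)))).
rewrite /dotF mulr_sumr; apply: eq_bigr => p _ /=.
rewrite /GRing.scale /=; ring.
Qed.

Lemma normF_le_normT (X : tens R D m) l : normF (X l) <= normT X.
Proof.
apply: le_sqrt_of_sq; first exact: normF_ge0.
rewrite (bigD1 l) //= lerDl; apply: sumr_ge0 => l' _; exact: sqr_ge0.
Qed.

Lemma normT_le_n1 (X : tens R D m) : normT X <= \sum_l n1 (X l).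
Proof.
apply: sqrt_le_of_sq; first by apply: sumr_ge0 => l _; apply: n1_ge0.
apply: le_trans (@sum_sq_le _ _ (fun l => normF (X l)) (fun l => normF_ge0 _ _ _)) _.
rewrite ler_sqr ?nnegrE; last by apply: sumr_ge0 => l _; apply: n1_ge0.
  by apply: ler_sum => l _; apply: normF_le_n1.
by apply: sumr_ge0 => l _; apply: normF_ge0.
Qed.

Lemma dotF_gt0 N (x : 'rV[R]_N) : x != 0 -> 0 < dotF x x.
Proof.
move=> x0.
have /existsP [p xp] : [exists p, x ord0 p != 0].
  apply: contraNT x0 => /existsPn H; apply/eqP/rowP => p; rewrite mxE.
  by move: (H p); rewrite negbK => /eqP.
rewrite dotF_xx (bigD1 p) //=.
have h1 : 0 < x ord0 p ^+ 2 by rewrite lt_neqAle sqr_ge0 andbT eq_sym sqrf_eq0.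
have h2 : 0 <= \sum_(i < N | i != p) x ord0 i ^+ 2 by apply: sumr_ge0 => i _; apply: sqr_ge0.
lra.
Qed.

Definition Nn : nat := (\max_(l < D) \max_(k < K l) n l k)%N.
Lemma n_le_N l k : (n l k <= Nn)%N.
Proof.
rewrite /Nn; apply: (leq_trans _ (@leq_bigmax _ (fun l => (\max_(k < K l) n l k)%N) l)).
exact: (@leq_bigmax _ (fun k => n l k) k).
Qed.
Lemma n_le_Nr l k : (n l k)%:R <= Nn%:R :> R.
Proof. by rewrite ler_nat n_le_N. Qed.

Section Est.
Variable Mf : 'I_D -> R.
Hypothesis HM0 : forall l, 0 <= Mf l.
Hypothesis HMb : forall l (w : forall k : 'I_(K l), 'rV[R]_(n l k)),
  n1 (Phi l w) <= Mf l * \prod_(k < K l) n1 (w k).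

Definition Aa (b : forall l, 'I_(K l) -> R) l := Nn%:R * \sum_(k < K l) (b l k + 1) + 1.
Definition Pp b l := \prod_(k < K l) (Aa b l + 1).
Definition S1 b := \sum_(l < D) (K l)%:R * (Mf l * (Nn%:R * Pp b l)).
Definition W (Lhat : R) b (gn : R) l := `|Lhat| * S1 b * (Mf l * Pp b l)
   + gn * ((K l)%:R * (Mf l * (Nn%:R * Pp b l))).
Definition Cc Lhat b gn := 4 * Nn%:R * \sum_l W Lhat b gn l.

Variables (Lhat : R) (G : cores R D K n) (rho : R).
Hypotheses (HL : lipschitz_grad gf Lhat) (Hne : exists l k, gradC Phi f G l k != 0)
  (rho0 : 0 < rho) (rho1 : rho <= 1).

Let g := gradC Phi f G.
Let u := uD Phi f G.
Let b := fun l k => normF (G l k).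
Let eps := fun l k => (rho * u) *: g l k.
Let Gt := perturbed Phi f rho G.
Let T := layers Phi G.
Let Tt := layers Phi Gt.

Let SS := \sum_(l < D) \sum_(k < K l) normF (g l k) ^+ 2.

Lemma SS_pos : 0 < SS.
Proof.
case: Hne => l [k gk].
rewrite /SS (bigD1 l) //= (bigD1 k) //=.
have h1 : 0 < normF (g l k) ^+ 2 by rewrite normF_sq; apply: dotF_gt0.
have h2 : 0 <= \sum_(i < K l | i != k) normF (g l i) ^+ 2
  by apply: sumr_ge0 => i _; apply: sqr_ge0.
have h3 : 0 <= \sum_(i < D | i != l) \sum_(k0 < K i) normF (g i k0) ^+ 2.
  by apply: sumr_ge0 => i _; apply: sumr_ge0 => j _; apply: sqr_ge0.
lra.
Qed.

Lemma u_pos : 0 < u.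
Proof. by rewrite /u /uD invr_gt0 sqrtr_gt0; exact: SS_pos. Qed.

Lemma u_bound l k : u * normF (g l k) <= 1.
Proof.
have s0 : 0 < Num.sqrt SS by rewrite sqrtr_gt0; exact: SS_pos.
rewrite /u /uD -/SS mulrC ler_pdivrMr // mul1r.
apply: le_sqrt_of_sq; first exact: normF_ge0.
rewrite /SS (bigD1 l) //= (bigD1 k) //= -addrA lerDl.
apply: addr_ge0; first by apply: sumr_ge0 => i _; apply: sqr_ge0.
by apply: sumr_ge0 => i _; apply: sumr_ge0 => j _; apply: sqr_ge0.
Qed.

Lemma c_bound l k : rho * u * normF (g l k) <= rho.
Proof.
rewrite -mulrA -[X in _ <= X]mulr1 ler_wpM2l //; [exact: ltW | exact: u_bound].
Qed.

Lemma b_ge0 l k : 0 <= b l k.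
Proof. exact: normF_ge0. Qed.

Lemma Aa_ge1 l : 1 <= Aa b l.
Proof.
rewrite /Aa lerDr; apply: mulr_ge0; first exact: ler0n.
apply: sumr_ge0 => k _; have := b_ge0 l k; lra.
Qed.

Lemma Pp_ge0 l : 0 <= Pp b l.
Proof. apply: prodr_ge0 => k _; have := Aa_ge1 l; lra. Qed.

Lemma n1_eps l k : n1 (eps l k) <= Nn%:R * rho.
Proof.
have u0 := u_pos.
rewrite /eps n1Z ger0_norm; last by apply: mulr_ge0; apply: ltW => //.
apply: le_trans (_ : rho * u * ((n l k)%:R * normF (g l k)) <= _).
  apply: ler_wpM2l; [apply: mulr_ge0; apply: ltW => // | exact: n1_le_normF].
rewrite mulrCA; apply: ler_pM.
- exact: ler0n.
- apply: mulr_ge0; [apply: mulr_ge0; apply: ltW => // | exact: normF_ge0].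
- exact: n_le_Nr.
- exact: c_bound.
Qed.

Lemma GA l k : n1 (G l k) + n1 (eps l k) <= Aa b l - 1.
Proof.
rewrite /Aa addrK.
apply: le_trans (_ : Nn%:R * (b l k + 1) <= _).
  have h1 : n1 (G l k) <= Nn%:R * b l k.
    apply: le_trans (n1_le_normF _ _ _) _; apply: ler_wpM2r; [exact: b_ge0| exact: n_le_Nr].
  have h2 := n1_eps l k.
  have h4 : Nn%:R * rho <= Nn%:R by rewrite -[X in _ <= X]mulr1; apply: ler_wpM2l => //; exact: ler0n.
  rewrite mulrDr mulr1; lra.
apply: ler_wpM2l; first exact: ler0n.
rewrite (bigD1 k) //= lerDl; apply: sumr_ge0 => i _; have := b_ge0 l i; lra.
Qed.

Lemma Gt_eq l k : Gt l k = G l k + eps l k.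
Proof. by []. Qed.

Lemma Aa_ge0 l : 0 <= Aa b l.
Proof. have := Aa_ge1 l; lra. Qed.

Lemma Nrho_ge0 : 0 <= Nn%:R * rho.
Proof. apply: mulr_ge0; [exact: ler0n | exact: ltW]. Qed.

Lemma layer_diff l : n1 (Tt l - T l) <= (K l)%:R * (Mf l * (Nn%:R * rho * Pp b l)).
Proof.
have := @ml_lip R (K l) (n l) (m l) (Phi l) (HPhi l) (Mf l) (HM0 l) (HMb l)
  (G l) (eps l) (Nn%:R * rho) (Aa b l) (Aa_ge0 l) (n1_eps l).
have HA : forall k, n1 (G l k) + n1 (eps l k) <= Aa b l.
  by move=> k; apply: le_trans (GA l k) _; lra.
by move=> /(_ HA).
Qed.

Lemma normT_diff : normT (addT R D m Tt (oppT R D m T)) <= rho * S1 b.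
Proof.
apply: le_trans (normT_le_n1 _) _.
rewrite /S1 mulr_sumr; apply: ler_sum => l _.
apply: le_trans (layer_diff l) _.
by rewrite /Pp le_eqVlt; apply/orP; left; apply/eqP; ring.
Qed.

Lemma S1_ge0 : 0 <= S1 b.
Proof.
apply: sumr_ge0 => l _; apply: mulr_ge0; first exact: ler0n.
apply: mulr_ge0 => //; apply: mulr_ge0; [exact: ler0n | exact: Pp_ge0].
Qed.

Lemma gf_diff l : normF (gf Tt l - gf T l) <= `|Lhat| * (rho * S1 b).
Proof.
apply: le_trans (normF_le_normT (addT R D m (gf Tt) (oppT R D m (gf T))) l) _.
apply: le_trans (HL _ _) _.
have h0 : 0 <= normT (addT R D m Tt (oppT R D m T)) by apply: sqrtr_ge0.
apply: le_trans (_ : `|Lhat| * normT (addT R D m Tt (oppT R D m T)) <= _).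
  by apply: ler_wpM2r => //; apply: ler_norm.
by apply: ler_wpM2l => //; apply: normT_diff.
Qed.

Lemma single_bound l k p :
  n1 (Phi l (dfwith (Gt l) k (delta_mx ord0 p))) <= Mf l * Pp b l.
Proof.
apply: le_trans (HMb _ _) _; apply: ler_wpM2l => //.
apply: ler_prod => k' _; rewrite n1_ge0 /=.
have := Aa_ge1 l.
case: (eqVneq k k') => [e|ne].
  by destruct e; rewrite dfw_in n1_delta; lra.
rewrite dfw_out // Gt_eq; have := GA l k'; have := n1D _ _ (G l k') (eps l k'); lra.
Qed.

Lemma single_diff l k p :
  n1 (Phi l (dfwith (Gt l) k (delta_mx ord0 p)) - Phi l (dfwith (G l) k (delta_mx ord0 p)))
  <= (K l)%:R * (Mf l * (Nn%:R * rho * Pp b l)).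
Proof.
pose x := dfwith (G l) k (delta_mx ord0 p : 'rV[R]_(n l k)).
pose y := dfwith (eps l) k (0 : 'rV[R]_(n l k)).
have -> : dfwith (Gt l) k (delta_mx ord0 p) = fun k' => x k' + y k'.
  apply: functional_extensionality_dep => k'; rewrite /x /y.
  case: (eqVneq k k') => [e|ne].
    by destruct e; rewrite !dfw_in addr0.
  by rewrite !dfw_out.
have Hy : forall k', n1 (y k') <= Nn%:R * rho.
  move=> k'; rewrite /y; case: (eqVneq k k') => [e|ne].
    by destruct e; rewrite dfw_in n1_0; exact: Nrho_ge0.
  by rewrite dfw_out //; exact: n1_eps.
have HA : forall k', n1 (x k') + n1 (y k') <= Aa b l.
  move=> k'; rewrite /x /y; have := Aa_ge1 l; case: (eqVneq k k') => [e|ne].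
    by destruct e; rewrite !dfw_in n1_delta n1_0; lra.
  by rewrite !dfw_out //; have := GA l k'; lra.
exact: (@ml_lip R (K l) (n l) (m l) (Phi l) (HPhi l) (Mf l) (HM0 l) (HMb l)
  x y (Nn%:R * rho) (Aa b l) (Aa_ge0 l) Hy HA).
Qed.

Let gn := normT (gf T).

Lemma gn_ge0 : 0 <= gn.
Proof. exact: sqrtr_ge0. Qed.

Lemma W_ge0 l : 0 <= W Lhat b gn l.
Proof.
have := S1_ge0; have := Pp_ge0 l; have := HM0 l; have := gn_ge0.
have h1 : 0 <= (K l)%:R :> R by exact: ler0n.
have h2 : 0 <= Nn%:R :> R by exact: ler0n.
have h3 : 0 <= `|Lhat| by exact: normr_ge0.
move=> *; rewrite /W; apply: addr_ge0; repeat apply: mulr_ge0 => //.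
Qed.

Lemma delta_bound l k :
  n1 (gradC Phi f Gt l k - g l k) <= Nn%:R * rho * W Lhat b gn l.
Proof.
apply: le_trans (_ : \sum_(p < n l k) rho * W Lhat b gn l <= _).
  rewrite /n1; apply: ler_sum => p _; rewrite mxE /g !gradC_eq !mxE.
  set U := Phi l (dfwith (Gt l) k (delta_mx ord0 p)).
  set V := Phi l (dfwith (G l) k (delta_mx ord0 p)).
  have -> : dotF (gf (layers Phi Gt) l) U - dotF (gf (layers Phi G) l) V =
     dotF (gf Tt l - gf T l) U + dotF (gf T l) (U - V).
    by rewrite dotFDl dotFNl dotFDr dotFNr; ring.
  apply: le_trans (ler_normD _ _) _.
  have e1 : `|dotF (gf Tt l - gf T l) U| <= `|Lhat| * (rho * S1 b) * (Mf l * Pp b l).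
    apply: le_trans (dotF_le _ _ _ _) _; apply: ler_pM.
    - exact: normF_ge0.
    - exact: n1_ge0.
    - exact: gf_diff.
    - exact: single_bound.
  have e2 : `|dotF (gf T l) (U - V)| <= gn * ((K l)%:R * (Mf l * (Nn%:R * rho * Pp b l))).
    apply: le_trans (dotF_le _ _ _ _) _; apply: ler_pM.
    - exact: normF_ge0.
    - exact: n1_ge0.
    - exact: normF_le_normT.
    - exact: single_diff.
  apply: le_trans (lerD e1 e2) _.
  by rewrite /W le_eqVlt; apply/orP; left; apply/eqP; ring.
rewrite sumr_const card_ord -[X in X <= _]mulr_natl mulrA.
apply: ler_wpM2r; first exact: W_ge0.
apply: ler_wpM2r; [exact: ltW | exact: n_le_Nr].
Qed.

Lemma dot_split l i :
  dotF (G l i) (gradC Phi f Gt l i) =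
  dotF (gf Tt l) (Tt l) - rho * u * dotF (g l i) (gradC Phi f Gt l i).
Proof.
have -> : G l i = Gt l i - (rho * u) *: g l i by rewrite Gt_eq /eps addrK.
by rewrite dotFDl dotFNl dotFZl conserv.
Qed.

Lemma R_bound l i j :
  `|2 * (rho * u) * (dotF (g l i) (gradC Phi f Gt l i - g l i)
                  - dotF (g l j) (gradC Phi f Gt l j - g l j))|
  <= Cc Lhat b gn * rho ^+ 2.
Proof.
have u0 := u_pos.
have c0 : 0 <= rho * u by apply: mulr_ge0; apply: ltW.
have key : forall k, rho * u * `|dotF (g l k) (gradC Phi f Gt l k - g l k)|
     <= rho * (Nn%:R * rho * W Lhat b gn l).
  move=> k; apply: le_trans (_ : rho * u * (normF (g l k) *
      n1 (gradC Phi f Gt l k - g l k)) <= _).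
    by apply: ler_wpM2l => //; apply: dotF_le.
  rewrite mulrA; apply: ler_pM.
  - by apply: mulr_ge0 => //; apply: normF_ge0.
  - exact: n1_ge0.
  - exact: c_bound.
  - exact: delta_bound.
have ki := key i; have kj := key j.
rewrite normrM ger0_norm; last by apply: mulr_ge0 => //; lra.
apply: le_trans (_ : 2 * (rho * u) * (`|dotF (g l i) (gradC Phi f Gt l i - g l i)|
   + `|dotF (g l j) (gradC Phi f Gt l j - g l j)|) <= _).
  apply: ler_wpM2l; first by apply: mulr_ge0 => //; lra.
  exact: ler_normB.
apply: le_trans (_ : 4 * Nn%:R * W Lhat b gn l * rho ^+ 2 <= _).
  rewrite -mulrA mulrDr; set a := rho * u * _ in ki; set a2 := rho * u * _ in kj.
  rewrite -/a -/a2; lra.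
rewrite /Cc ler_wpM2r ?sqr_ge0 // ler_wpM2l; last first.
  rewrite (bigD1 l) //= lerDl; apply: sumr_ge0 => l' _; exact: W_ge0.
apply: mulr_ge0; [lra | exact: ler0n].
all: done.
Qed.

Lemma main_est (gamma : R -> cores R D K n) t0 l i j :
  gamma t0 = G -> sam_flow_at Phi f rho gamma t0 ->
  exists Rij : R,
    is_derive t0 (1 : R) (fun t => normF (gamma t l i) ^+ 2 - normF (gamma t l j) ^+ 2)
      (2 * rho * uD Phi f G * (normF (gradC Phi f G l i) ^+ 2
          - normF (gradC Phi f G l j) ^+ 2) + Rij)
    /\ `|Rij| <= Cc Lhat (fun l k => normF (G l k)) (normT (gf (layers Phi G))) * rho ^+ 2.
Proof.
move=> e Hf.
exists (2 * (rho * u) * (dotF (g l i) (gradC Phi f Gt l i - g l i)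
                  - dotF (g l j) (gradC Phi f Gt l j - g l j))).
split; last exact: R_bound.
have H1 := deriv_sq _ _ _ _ (Hf l i); have H2 := deriv_sq _ _ _ _ (Hf l j).
rewrite /samGrad e in H1 H2.
apply: is_derive_eq (is_deriveB H1 H2) _.
rewrite !dotFNr !dot_split !normF_sq !dotFDr !dotFNr.
rewrite /g /u; ring.
Qed.

End Est.
End Main.

Theorem theorem4 (R : realType) (D : nat) (K : 'I_D -> nat)
  (n : forall l : 'I_D, 'I_(K l) -> nat) (m : 'I_D -> nat)
  (Phi : forall l : 'I_D, (forall k : 'I_(K l), 'rV[R]_(n l k)) -> 'rV[R]_(m l)) :
  (forall l : 'I_D, (2 <= K l)%N) ->
  (forall l : 'I_D, multilinear (Phi l)) ->
  exists C : R -> (forall l : 'I_D, 'I_(K l) -> R) -> R -> R,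
  forall (Lhat : R) (f : tens R D m -> R) (gf : tens R D m -> tens R D m),
    has_gradient f gf ->
    lipschitz_grad gf Lhat ->
  forall G : cores R D K n,
    (exists (l : 'I_D) (k : 'I_(K l)), gradC Phi f G l k != 0) ->
  forall (l : 'I_D) (i j : 'I_(K l)), i != j ->
  forall rho : R, 0 < rho -> rho <= 1 ->
  forall (gamma : R -> cores R D K n) (t0 : R),
    gamma t0 = G ->
    sam_flow_at Phi f rho gamma t0 ->
    exists Rij : R,
      is_derive t0 (1 : R)
        (fun t => normF (gamma t l i) ^+ 2 - normF (gamma t l j) ^+ 2)
        (2 * rho * uD Phi f G
           * (normF (gradC Phi f G l i) ^+ 2 - normF (gradC Phi f G l j) ^+ 2)
         + Rij)
      /\ `|Rij| <= C Lhat (fun l k => normF (G l k)) (normT (gf (layers Phi G)))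
                   * rho ^+ 2.
Proof.
move=> _ HPhi.
have /choice [Mf HM] := fun l => @ml_bound R (K l) (n l) (m l) (Phi l) (HPhi l).
exists (Cc R D K n Mf).
move=> Lhat f gf Hg HL G Hne l i j _ rho rho0 rho1 gamma t0 e Hf.
exact: (@main_est R D K n m Phi HPhi f gf Hg Mf (fun l => (HM l).1) (fun l => (HM l).2)
  Lhat G rho HL Hne rho0 rho1 gamma t0 l i j e Hf).
Qed.
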